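(* Let $(X_1,\Sigma_1),\dots,(X_N,\Sigma_N)$ be i.i.d. copies of a random pair $(X,\Sigma)$ valued in $\mathcal{X}\times\mathfrak{S}_n$. Suppose that $P_x\in\mathcal{T}$ for all $x\in\mathcal{X}$ and that $$H=\inf_{x\in\mathcal{X}}\min_{i<j}|p_{i,j}(x)-1/2|>0.$$ Let $\mathcal{S}_0$ be a class of measurable maps $\mathcal{X}\to\mathfrak{S}_n$ with finite cardinality $C<+\infty$ that contains the rule $s^*(x)=\sigma^*_{P_x}$. Let $\widehat{s}_N$ be any minimizer over $\mathcal{S}_0$ of $\widehat{\mathcal{R}}_N(s)=\frac1N\sum_{k=1}^N d_\tau(s(X_k),\Sigma_k)$. Then, for any $\delta\in(0,1)$, with probability at least $1-\delta$: $$\mathcal{R}(\widehat{s}_N)-\mathcal{R}^*\le \Big(\frac{n(n-1)}{2H}\Big)\times\frac{\log(C/\delta)}{N}.$$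
   Context: $\mathfrak{S}_n$ is the set of permutations of $\{1,\dots,n\}$. The Kendall $\tau$ distance is $d_\tau(\sigma,\sigma')=\sum_{i<j}\mathbb{I}\{(\sigma(i)-\sigma(j))(\sigma'(i)-\sigma'(j))<0\}$. $P_x$ is the conditional distribution of $\Sigma$ given $X=x$, and $p_{i,j}(x)=\mathbb{P}\{\Sigma(i)<\Sigma(j)\mid X=x\}$. A distribution $P$ on $\mathfrak{S}_n$ with pairwise probabilities $p_{i,j}=\mathbb{P}_{\Sigma\sim P}\{\Sigma(i)<\Sigma(j)\}$ is strictly stochastically transitive if (a) $p_{i,j}\ge1/2$ and $p_{j,k}\ge1/2$ imply $p_{i,k}\ge1/2$ for all $i,j,k$, and (b) $p_{i,j}\neq1/2$ for all $i<j$. $\mathcal{T}$ is the set of such distributions. For $P\in\mathcal{T}$, the unique minimizer $\sigma^*_P$ of $\sigma\mapsto\mathbb{E}_{\Sigma\sim P}[d_\tau(\Sigma,\sigma)]$ is given by $\sigma^*_P(i)=1+\sum_{k\neq i}\mathbb{I}\{p_{i,k}<1/2\}$. The risk is $\mathcal{R}(s)=\mathbb{E}[d_\tau(s(X),\Sigma)]$, and $\mathcal{R}^*$ is its infimum over all measurable $s:\mathcal{X}\to\mathfrak{S}_n$. *)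

(* Defs.v *)
From HB Require Import structures.
From mathcomp Require Import all_boot all_order all_algebra all_fingroup.
From mathcomp Require Import all_classical all_reals all_analysis.
Set Implicit Arguments. Unset Strict Implicit. Unset Printing Implicit Defensive.
Import Order.TTheory GRing.Theory Num.Theory.
Local Open Scope classical_set_scope.
Local Open Scope ring_scope.

Definition d_tau (n : nat) (s s' : 'S_n) : nat :=
  \sum_(i < n) \sum_(j < n | (i < j)%N)
     (((((s i)%:Z - (s j)%:Z) * ((s' i)%:Z - (s' j)%:Z)) < 0)%R : nat).

(* A distribution on 'S_n given by its mass function q;
   pairwise probability p_{i,j} = P{Sigma(i) < Sigma(j)}. *)
Definition pairp {R : realType} (n : nat) (q : 'S_n -> R) (i j : 'I_n) : R :=
  \sum_(s : 'S_n | (s i < s j)%N) q s.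

Definition SST {R : realType} (n : nat) (q : 'S_n -> R) : Prop :=
  (forall i j k : 'I_n, pairp q i j >= 1/2 -> pairp q j k >= 1/2 -> pairp q i k >= 1/2)
  /\ (forall i j : 'I_n, (i < j)%N -> pairp q i j != 1/2).

(* min_{i<j} |p_{i,j} - 1/2| (default 1 for the empty min, irrelevant since
   |p - 1/2| <= 1/2). *)
Definition minmargin {R : realType} (n : nat) (q : 'S_n -> R) : R :=
  \big[Order.min/1]_(i < n) \big[Order.min/1]_(j < n | (i < j)%N)
     `|pairp q i j - 1/2|.

Definition measurable_rule {d} {T : measurableType d} (n : nat) (s : T -> 'S_n) : Prop :=
  forall sg : 'S_n, measurable (s @^-1` [set sg]).

(* Risk R(s) = E[d_tau(s(X), Sigma)], where (X,Sigma) has the law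
   mu(dx) P_x(sigma), P_x having mass function p x. *)
Definition risk {d} {T : measurableType d} {R : realType} (n : nat)
  (mu : probability T R) (p : T -> 'S_n -> R) (s : T -> 'S_n) : R :=
  fine (\int[mu]_x (\sum_(sg : 'S_n) p x sg * (d_tau (s x) sg)%:R)%:E)%E.

Definition risk_star {d} {T : measurableType d} {R : realType} (n : nat)
  (mu : probability T R) (p : T -> 'S_n -> R) : R :=
  inf [set risk mu p s | s in [set s : T -> 'S_n | measurable_rule s]].

Definition emp_risk {dO} {Omega : measurableType dO} {T : Type} {R : realType}
  (n N : nat) (X : 'I_N -> Omega -> T) (Sg : 'I_N -> Omega -> 'S_n)
  (w : Omega) (s : T -> 'S_n) : R :=
  (N%:R)^-1 * \sum_(k < N) (d_tau (s (X k w)) (Sg k w))%:R.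

(* p is a measurable family of probability mass functions on 'S_n:
   p x is the mass function of P_x (conditional law of Sigma given X = x). *)
Definition cond_pmf {d} {T : measurableType d} {R : realType} (n : nat)
  (p : T -> 'S_n -> R) : Prop :=
  (forall sg : 'S_n, measurable_fun setT (fun x => p x sg))
  /\ (forall x sg, 0 <= p x sg) /\ (forall x, \sum_(sg : 'S_n) p x sg = 1).

(* (X_k, Sigma_k)_{k<N} are i.i.d. copies of (X, Sigma), whose joint law is
   mu(dx) P_x(sigma): each pair has this law, and the pairs are mutually
   independent (product rule for events {(X_k,Sigma_k) in B_k}, B_k ranging over
   the measurable subsets of T x 'S_n, i.e. B_k = U_sg A_k sg x {sg}). *)
Definition iid_sample {dO d} {Omega : measurableType dO} {T : measurableType d}
  {R : realType} (n N : nat) (P : probability Omega R) (mu : probability T R)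
  (p : T -> 'S_n -> R) (X : 'I_N -> Omega -> T) (Sg : 'I_N -> Omega -> 'S_n) : Prop :=
  (forall k, measurable_fun setT (X k))
  /\ (forall k, measurable_rule (Sg k))
  /\ (forall k (A : set T) (sg : 'S_n), measurable A ->
        P [set w | A (X k w) /\ Sg k w = sg] = (\int[mu]_(x in A) (p x sg)%:E)%E)
  /\ (forall A : 'I_N -> 'S_n -> set T, (forall k sg, measurable (A k sg)) ->
        P (\bigcap_(k in [set: 'I_N]) [set w | A k (Sg k w) (X k w)])
        = (\prod_(k < N) fine (P [set w | A k (Sg k w) (X k w)]))%:E).

(* Main.v *)
Require Import Defs.
From HB Require Import structures.
From mathcomp Require Import all_boot all_order all_algebra all_fingroup.
From mathcomp Require Import all_classical all_reals all_analysis.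
From mathcomp Require Import ring lra zify.
Import Order.TTheory GRing.Theory Num.Theory.
Set Implicit Arguments. Unset Strict Implicit. Unset Printing Implicit Defensive.
Local Open Scope classical_set_scope.
Local Open Scope ring_scope.

Section Conv.
Variable R : realType.

Lemma step_conv (x : R) (k : nat) : 0 <= x ->
  k.+1%:R * (x ^+ k - 1) <= k%:R * (x ^+ k.+1 - 1).
Proof.
move=> x0; elim: k => [|k IH]; first by rewrite !mulr0n mul0r expr0 subrr mulr0.
have key : (k.+2)%:R * (x ^+ k.+1 - 1) - (k.+1)%:R * (x ^+ k.+2 - 1)
  = (k.+1%:R * (x ^+ k - 1) - k%:R * (x ^+ k.+1 - 1)) - k.+1%:R * x ^+ k * (x - 1) ^+ 2.
  have e2 : k.+2%:R = k%:R + 2 :> R by rewrite -addn2 natrD.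
  have e1 : k.+1%:R = k%:R + 1 :> R by rewrite -addn1 natrD.
  rewrite e2 e1 !exprS; ring.
rewrite -subr_le0 key; have h1 : 0 <= k.+1%:R * x ^+ k * (x - 1) ^+ 2.
  by rewrite mulr_ge0 ?sqr_ge0 // mulr_ge0 ?exprn_ge0.
rewrite -subr_le0 in IH; lra.
Qed.

Lemma conv_pow (x : R) (m M : nat) : 0 <= x -> (m <= M)%N ->
  M%:R * (x ^+ m - 1) <= m%:R * (x ^+ M - 1).
Proof.
move=> x0; elim: M => [|M IH].
  by rewrite leqn0 => /eqP ->; rewrite !mulr0n !mul0r.
rewrite leq_eqVlt => /orP[/eqP ->|]; first by [].
rewrite ltnS => hmM; have {}IH := IH hmM.
have S := step_conv M x0.
case: m hmM IH => [|m] hmM IH; first by rewrite expr0 subrr !mul0r mulr0.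
have Mpos : 0 < M%:R :> R by rewrite ltr0n (leq_trans _ hmM).
suff : M%:R * ((M.+1)%:R * (x ^+ m.+1 - 1)) <= M%:R * ((m.+1)%:R * (x ^+ M.+1 - 1)).
  by rewrite ler_pM2l.
apply: (le_trans (y := (M.+1)%:R * ((m.+1)%:R * (x ^+ M - 1)))).
  by rewrite mulrCA ler_pM2l ?ltr0n.
rewrite mulrCA [X in _ <= X]mulrCA ler_wpM2l //.
Qed.
End Conv.

Section Perm.
Variable n : nat.

Definition bp (s : 'S_n) (i j : 'I_n) : bool := (s i < s j)%N.

Lemma sign_prod (a b c d : nat) : a != b -> c != d ->
  ((a%:Z - b%:Z) * (c%:Z - d%:Z) < 0) = ((a < b)%N != (c < d)%N).
Proof.
move=> ab cd.
have [h1|h1|h1] := ltngtP a b; last by rewrite h1 eqxx in ab.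
- have n1 : (a%:Z - b%:Z < 0) by rewrite subr_lt0 ltz_nat.
  rewrite (nmulr_rlt0 _ n1) subr_gt0 ltz_nat.
  have [h2|h2|h2] := ltngtP c d => //; by rewrite h2 eqxx in cd.
- have n1 : (0 < a%:Z - b%:Z) by rewrite subr_gt0 ltz_nat.
  rewrite (pmulr_rlt0 _ n1) subr_lt0 ltz_nat.
  have [h2|h2|h2] := ltngtP c d => //; by rewrite h2 eqxx in cd.
Qed.

Lemma perm_neq (s : 'S_n) (i j : 'I_n) : i != j -> (s i : nat) != s j.
Proof. by move=> ij; apply: contra ij => /eqP/val_inj/perm_inj ->. Qed.

Lemma dtau_term (s s' : 'S_n) (i j : 'I_n) : i != j ->
  ((((s i)%:Z - (s j)%:Z) * ((s' i)%:Z - (s' j)%:Z)) < 0)%R = (bp s i j != bp s' i j).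
Proof. by move=> ij; rewrite sign_prod ?perm_neq. Qed.

Lemma dtauE (s s' : 'S_n) : d_tau s s' =
  (\sum_(i < n) \sum_(j < n | (i < j)%N) (bp s i j != bp s' i j))%N.
Proof.
apply: eq_bigr => i _; apply: eq_bigr => j ij; rewrite dtau_term //.
by rewrite neq_ltn ij.
Qed.

Lemma bp_neg (g : 'S_n) (i j : 'I_n) : i != j -> bp g j i = ~~ bp g i j.
Proof.
move=> ij; rewrite /bp.
have hs : (g i : nat) != g j by apply: contra ij => /eqP/val_inj/perm_inj ->.
by have [h|h|h] := ltngtP (g i) (g j) => //; rewrite h eqxx in hs.
Qed.

End Perm.

Section Pairp.
Variables (R : realType) (n : nat) (q : 'S_n -> R).
Hypothesis q1 : \sum_(g : 'S_n) q g = 1.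
Hypothesis sst : SST q.

Lemma pairp_swap (i j : 'I_n) : i != j -> pairp q j i = 1 - pairp q i j.
Proof.
move=> ij; rewrite -q1 (bigID (fun g : 'S_n => bp g i j)) /= /pairp.
rewrite addrAC subrr add0r; apply: eq_bigl => g.
by rewrite -[(g j < g i)%N]/(bp g j i) bp_neg.
Qed.

Lemma pairp_neq (i j : 'I_n) : i != j -> pairp q i j != 1/2.
Proof.
move=> ij; have [h|h|h] := ltngtP i j; last by move: ij; rewrite (val_inj h) eqxx.
- exact: sst.2.
- rewrite pairp_swap 1?eq_sym//; apply: contra (sst.2 _ _ h) => /eqP e.
  apply/eqP; lra.
Qed.

Variable sg : 'S_n.
Hypothesis hsg : forall i, (sg i : nat) = #|[pred k : 'I_n | (k != i) && (pairp q i k < 1/2)]|.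

Lemma sigma_lt (i j : 'I_n) : i != j -> 1/2 < pairp q i j -> (sg i < sg j)%N.
Proof.
move=> ij pij; rewrite !hsg; apply: proper_card; apply/properP; split.
  apply/fintype.subsetP => k; rewrite !inE => /andP[ki pik].
  have kj : k != j by apply: contraTneq pik => ->; rewrite -leNgt ltW.
  have pki : 1/2 < pairp q k i by rewrite pairp_swap 1?eq_sym//; lra.
  have pkj : 1/2 <= pairp q k j by apply: sst.1 (ltW pki) (ltW pij).
  have pkj' : 1/2 < pairp q k j by rewrite lt_neqAle pkj eq_sym pairp_neq.
  by rewrite kj /= pairp_swap//; lra.
exists i; first by rewrite inE ij /= pairp_swap//; lra.
by rewrite inE eqxx.
Qed.

Lemma bp_sigma (i j : 'I_n) : i != j -> bp sg i j = (1/2 < pairp q i j).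
Proof.
move=> ij; have [h|h] := ltP (1/2) (pairp q i j); first by rewrite /bp sigma_lt.
have h' : pairp q i j < 1/2 by rewrite lt_neqAle h pairp_neq.
have : (sg j < sg i)%N by apply: sigma_lt; rewrite 1?eq_sym// pairp_swap//; lra.
by move/ltnW => h2; rewrite /bp ltnNge h2.
Qed.

End Pairp.

Lemma final_ineq (R : realFieldType) (H M m e P Q : R) :
  0 < H -> H <= 1/2 -> 0 < M -> 0 < m ->
  m * (1/2 + H) <= e -> e <= m ->
  M * (P - 1) <= m * (2 * H) ->
  M * (Q - 1) <= m * ((1 + 2 * H)^-1 - 1) ->
  P + (Q - P) / m * e <= 1 - H / M * (2 * e - m).
Proof.
move=> H0 H1 M0 m0 e1 e2 hP hQ.
have t0 : 0 < 1 + 2 * H by lra.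
set t := (1 + 2 * H)^-1 in hQ *.
have ht : t * (1 + 2 * H) = 1 by rewrite mulVf // gt_eqF.
have tpos : 0 < t by rewrite invr_gt0.
clearbody t.
set u := m / M.
have upos : 0 < u by rewrite divr_gt0.
set r := e / m.
have er : e = r * m by rewrite /r mulfVK // gt_eqF.
have r1 : 1/2 + H <= r by rewrite /r ler_pdivlMr // mulrC.
have r2 : r <= 1 by rewrite /r ler_pdivrMr // mul1r.
clearbody r.
have mn0 : m != 0 by rewrite gt_eqF.
have ht1 : t - 1 = - (2 * H * t).
  have : t - 1 = t - t * (1 + 2 * H) by rewrite ht.
  by move=> ->; ring.
have Mn0 : M != 0 by rewrite gt_eqF.
have ha : P - 1 <= 2 * H * u.
  have eq1 : M * (2 * H * u) = m * (2 * H) by rewrite /u; field.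
  by rewrite -(ler_pM2l M0) eq1.
have hb : Q - 1 <= - (2 * H * u * t).
  have eq1 : M * (- (2 * H * u * t)) = m * (t - 1) by rewrite ht1 /u; field.
  by rewrite -(ler_pM2l M0) eq1.
have s1 : (P - 1) * (1 - r) <= 2 * H * u * (1 - r) by apply: ler_wpM2r; lra.
have s2 : (Q - 1) * r <= - (2 * H * u * t) * r by apply: ler_wpM2r; lra.
have s3 : 1/2 <= t * r.
  have : t * (1/2 + H) <= t * r by apply: ler_wpM2l; lra.
  have -> : t * (1/2 + H) = (t * (1 + 2 * H)) / 2 by field.
  by rewrite ht.
have s4 : H * u * (1 - 2 * (t * r)) <= 0.
  by apply: mulr_ge0_le0; [apply: mulr_ge0; lra | lra].
have goalE : 1 - H / M * (2 * e - m) - (P + (Q - P) / m * e) =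
   - ((P - 1) * (1 - r) + (Q - 1) * r + H * u * (2 * r - 1)).
  by rewrite er /u; field; rewrite Mn0 mn0.
rewrite -subr_ge0 goalE oppr_ge0.
have -> : H * u * (2 * r - 1) = 2 * H * u * r - H * u by ring.
have e3 : 2 * H * u * (1 - r) + - (2 * H * u * t) * r + (2 * H * u * r - H * u)
   = H * u * (1 - 2 * (t * r)) by ring.
lra.
Qed.

Section Core.
Variables (R : realType) (n : nat) (q : 'S_n -> R).
Hypothesis q0 : forall g, 0 <= q g.
Hypothesis q1 : \sum_g q g = 1.
Hypothesis sst : SST q.
Variable sg : 'S_n.
Hypothesis hsg : forall i, (sg i : nat) = #|[pred k : 'I_n | (k != i) && (pairp q i k < 1/2)]|.
Variable H : R.
Hypothesis H0 : 0 < H.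
Hypothesis hH : forall i j : 'I_n, (i < j)%N -> H <= `|pairp q i j - 1/2|.
Variable s : 'S_n.

Definition Dp (i j : 'I_n) := bp s i j != bp sg i j.
Definition mD := (\sum_(i < n) \sum_(j < n | (i < j)%N) Dp i j)%N.
Definition Ag (g : 'S_n) :=
  (\sum_(i < n) \sum_(j < n | (i < j)%N) (Dp i j && (bp g i j == bp sg i j)))%N.

Lemma nat_id g : (d_tau s g + mD = d_tau sg g + (Ag g + Ag g))%N.
Proof.
rewrite !dtauE /mD /Ag -!big_split /=; apply: eq_bigr => i _.
rewrite -!big_split /=; apply: eq_bigr => j _.
by rewrite /Dp; case: (bp s i j); case: (bp sg i j); case: (bp g i j).
Qed.

Lemma A_le g : (Ag g <= mD)%N.
Proof.
apply: leq_sum => i _; apply: leq_sum => j _.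
by case: (Dp i j); case: (_ == _).
Qed.

Definition piA (i j : 'I_n) := \sum_g q g * (bp g i j == bp sg i j)%:R.

Lemma pairp_ge0 (i j : 'I_n) : 0 <= pairp q i j.
Proof. by apply: sumr_ge0 => g _. Qed.

Lemma pi_bound (i j : 'I_n) : (i < j)%N -> 1/2 + H <= piA i j /\ piA i j <= 1.
Proof.
move=> ij; have nij : i != j by rewrite neq_ltn ij.
have hij := hH ij.
rewrite /piA (bp_sigma q1 sst hsg nij).
have [h|h] := ltP (1/2) (pairp q i j).
- have -> : \sum_g q g * (bp g i j == true)%:R = pairp q i j.
    rewrite /pairp [RHS]big_mkcond; apply: eq_bigr => g _.
    by rewrite /bp; case: (_ < _)%N; rewrite ?mulr1 ?mulr0.
  have := pairp_ge0 j i; rewrite (pairp_swap q1 nij) => hp.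
  rewrite ger0_norm in hij; last by lra.
  split; lra.
- have h' : pairp q i j < 1/2 by rewrite lt_neqAle h (pairp_neq q1 sst nij).
  have -> : \sum_g q g * (bp g i j == false)%:R = 1 - pairp q i j.
    rewrite -(pairp_swap q1 nij) /pairp [RHS]big_mkcond; apply: eq_bigr => g _.
    rewrite -[(g j < g i)%N]/(bp g j i) (bp_neg g nij).
    by case: (bp g i j); rewrite ?mulr1 ?mulr0.
  have := pairp_ge0 i j => hp.
  rewrite ltr0_norm in hij; last by lra.
  split; lra.
Qed.

Definition eA := \sum_g q g * (Ag g)%:R.

Lemma EA : eA = \sum_(i < n) \sum_(j < n | (i < j)%N) (Dp i j)%:R * piA i j.
Proof.
rewrite /eA.
under eq_bigr do rewrite /Ag natr_sum big_distrr /=.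
rewrite exchange_big /=; apply: eq_bigr => i _.
under eq_bigr do rewrite natr_sum big_distrr /=.
rewrite exchange_big /=; apply: eq_bigr => j _.
rewrite /piA big_distrr /=; apply: eq_bigr => g _.
by rewrite -mulnb natrM mulrCA.
Qed.

Lemma eA_bounds : mD%:R * (1/2 + H) <= eA /\ eA <= mD%:R.
Proof.
rewrite EA /mD natr_sum big_distrl /=; split.
  apply: ler_sum => i _; rewrite natr_sum big_distrl /=; apply: ler_sum => j ij.
  by apply: ler_wpM2l; [exact: ler0n | exact: (pi_bound ij).1].
apply: ler_sum => i _; rewrite natr_sum; apply: ler_sum => j ij.
by rewrite -[X in _ <= X]mulr1; apply: ler_wpM2l; [exact: ler0n | exact: (pi_bound ij).2].
Qed.

Lemma diff_pt g : (d_tau s g)%:R - (d_tau sg g)%:R = 2 * (Ag g)%:R - mD%:R :> R.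
Proof.
have := congr1 (fun k => k%:R : R) (nat_id g); rewrite /= !natrD => h; lra.
Qed.

Lemma Ediff : \sum_g q g * ((d_tau s g)%:R - (d_tau sg g)%:R) = 2 * eA - mD%:R.
Proof.
under eq_bigr do rewrite diff_pt mulrBr.
rewrite sumrB -mulr_suml q1 mul1r /eA mulr_sumr; congr (_ - _).
by apply: eq_bigr => g _; rewrite mulrCA.
Qed.

Lemma opt_pt : 0 <= \sum_g q g * ((d_tau s g)%:R - (d_tau sg g)%:R).
Proof.
rewrite Ediff; have [h _] := eA_bounds.
have : 0 <= mD%:R * H :> R by apply: mulr_ge0; [exact: ler0n | exact: ltW].
lra.
Qed.

Variable Mn : nat.
Hypothesis Mn0 : (0 < Mn)%N.
Hypothesis mD_le : (mD <= Mn)%N.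
Hypothesis Hhalf : H <= 1/2.

Lemma core_chernoff :
  \sum_g q g * expR (ln (1 + 2 * H) / Mn%:R * ((d_tau sg g)%:R - (d_tau s g)%:R))
  <= 1 - H / Mn%:R * \sum_g q g * ((d_tau s g)%:R - (d_tau sg g)%:R).
Proof.
set lam := ln (1 + 2 * H) / Mn%:R.
have M0 : 0 < Mn%:R :> R by rewrite ltr0n.
have xM : expR lam ^+ Mn = 1 + 2 * H.
  rewrite -expRM_natl /lam mulrC divfK ?gt_eqF // lnK // posrE; have := H0; lra.
have yM : expR (- lam) ^+ Mn = (1 + 2 * H)^-1 by rewrite expRN exprVn xM.
rewrite Ediff.
have [m0|mpos] := eqVneq mD 0%N.
  have hA g : Ag g = 0%N by apply/eqP; rewrite -leqn0 -m0 A_le.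
  have he : eA = 0 by rewrite /eA big1 // => g _; rewrite hA mulr0.
  rewrite he m0 mulr0 subrr mulr0 subr0.
  rewrite -[X in _ <= X]q1; apply: ler_sum => g _.
  have := nat_id g; rewrite hA m0 !addn0 => ->.
  by rewrite subrr mulr0 expR0 mulr1.
have m0 : 0 < mD%:R :> R by rewrite ltr0n lt0n.
set m := mD%:R.
set P := expR (lam * m).
set Q := expR (- (lam * m)).
have hpt g : expR (lam * ((d_tau sg g)%:R - (d_tau s g)%:R)) <= P + (Q - P) / m * (Ag g)%:R.
  have -> : (d_tau sg g)%:R - (d_tau s g)%:R = m - 2 * (Ag g)%:R :> R.
    by have := diff_pt g; rewrite -/m; lra.
  have -> : lam * (m - 2 * (Ag g)%:R) = lam * m + (Ag g)%:R * (- (2 * lam)) by ring.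
  rewrite expRD expRM_natl -/P.
  set y := expR (- (2 * lam)).
  have y0 : 0 <= y := expR_ge0 _.
  have hc := conv_pow y0 (A_le g).
  have yM' : P * y ^+ mD = Q.
    by rewrite /y -expRM_natl /P -expRD /Q; congr expR; rewrite -/m; ring.
  rewrite -yM'.
  have P0 : 0 < P := expR_gt0 _.
  set z := y ^+ Ag g in hc *; set w := y ^+ mD in hc *.
  have e : P + (P * w - P) / m * (Ag g)%:R - P * z =
      P / m * ((Ag g)%:R * (w - 1) - m * (z - 1)).
    by field; rewrite gt_eqF.
  rewrite -subr_ge0 e; apply: mulr_ge0; first by rewrite divr_ge0 // ltW.
  by rewrite subr_ge0.
apply: (le_trans (y := \sum_g q g * (P + (Q - P) / m * (Ag g)%:R))).
  by apply: ler_sum => g _; apply: ler_wpM2l.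
have -> : \sum_g q g * (P + (Q - P) / m * (Ag g)%:R) = P + (Q - P) / m * eA.
  under eq_bigr do rewrite mulrDr.
  rewrite big_split /= -mulr_suml q1 mul1r /eA mulr_sumr; congr (_ + _).
  by apply: eq_bigr => g _; rewrite mulrCA.
have [e1 e2] := eA_bounds.
apply: final_ineq => //.
- have hc := conv_pow (expR_ge0 lam) mD_le.
  have eP : expR lam ^+ mD = P by rewrite /P -expRM_natl mulrC.
  rewrite eP xM in hc; lra.
- have hc := conv_pow (expR_ge0 (- lam)) mD_le.
  have eQ : expR (- lam) ^+ mD = Q by rewrite /Q -expRM_natl; congr expR; rewrite /m; ring.
  by rewrite eQ yM in hc.
Qed.

End Core.

Definition npairs (n : nat) := (\sum_(i < n) \sum_(j < n | (i < j)%N) 1)%N.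

Lemma mD_le_pairs (n : nat) (sg s : 'S_n) : (mD sg s <= npairs n)%N.
Proof.
rewrite /mD /npairs; apply: leq_sum => i _; apply: leq_sum => j _; exact: leq_b1.
Qed.

Lemma npairs2 n : (npairs n * 2 = n * (n - 1))%N.
Proof.
have e1 : npairs n = (\sum_(i < n) \sum_(j < n) (i < j)%N)%N.
  by apply: eq_bigr => i _; rewrite big_mkcond; apply: eq_bigr => j _; case: ifP.
have e2 : npairs n = (\sum_(i < n) \sum_(j < n) (j < i)%N)%N.
  by rewrite e1 exchange_big.
rewrite muln2 -addnn {1}e1 e2 -big_split /=.
rewrite (eq_bigr (fun _ => n - 1)%N) ?sum_nat_const ?card_ord //.
move=> i _; rewrite -big_split /=.
rewrite (eq_bigr (fun j : 'I_n => (j != i : nat))); last first.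
  by move=> j _; rewrite neq_ltn; case: ltngtP.
rewrite (bigD1 i) //= eqxx add0n.
rewrite (eq_bigr (fun _ => 1%N)); last by move=> j ->.
by rewrite sum1_card cardC1 card_ord subn1.
Qed.

Lemma dtau0 n (s g : 'S_n) : (n <= 1)%N -> d_tau s g = 0%N.
Proof.
move=> n1; rewrite /d_tau big1 // => i _; rewrite big1 // => j ij.
have := ltn_ord j; have := ltn_ord i; move: ij; lia.
Qed.

Lemma npairs_gt0 n : (1 < n)%N -> (0 < npairs n)%N.
Proof.
move=> n1; have := npairs2 n; case: (npairs n) => //=.
by rewrite mul0n => /esym/eqP; rewrite muln_eq0 subn_eq0 leqNgt n1 orbF; case: n n1.
Qed.

Lemma H_half (R : realType) n (q : 'S_n -> R) H : (forall g, 0 <= q g) ->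
  \sum_g q g = 1 -> (1 < n)%N ->
  (forall i j : 'I_n, (i < j)%N -> H <= `|pairp q i j - 1/2|) -> H <= 1/2.
Proof.
move=> q0 q1 n1 hH.
pose i0 : 'I_n := Ordinal (ltnW n1); pose j0 : 'I_n := Ordinal n1.
have := hH i0 j0 isT.
have ij : i0 != j0 by [].
have a0 : 0 <= pairp q i0 j0 by apply: sumr_ge0.
have b0 : 0 <= pairp q j0 i0 by apply: sumr_ge0.
rewrite (pairp_swap q1 ij) in b0.
by case: (lerP 0 (pairp q i0 j0 - 1/2)) => h; [rewrite ger0_norm|rewrite ltr0_norm]; lra.
Qed.

Section MeasLemmas.
Context (R : realType) (dO : measure_display) (Omega : measurableType dO).
Variable P : probability Omega R.

Lemma bigU_mem (I : choiceType) (r : seq I) (Pp : pred I) (F : I -> set Omega) w :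
  (\big[setU/set0]_(i <- r | Pp i) F i) w <-> exists i, [/\ i \in r, Pp i & F i w].
Proof.
rewrite -bigcup_seq_cond; split.
  by move=> [i /andP[ir Pi] Fi]; exists i.
by move=> [i [ir Pi Fi]]; exists i => //; apply/andP.
Qed.

Lemma measure_big_disj (I : choiceType) (r : seq I) (Pp : pred I) (F : I -> set Omega) :
  uniq r -> (forall i, measurable (F i)) ->
  (forall i j, i != j -> F i `&` F j = set0) ->
  P (\big[setU/set0]_(i <- r | Pp i) F i) = (\sum_(i <- r | Pp i) P (F i))%E.
Proof.
move=> + mF dF; elim: r => [|a r IH]; first by rewrite !big_nil measure0.
move=> /= /andP[ar ur]; rewrite !big_cons; case: ifP => Pa; last exact: IH ur.
rewrite measureU //; first by congr (_ + _)%E; exact: IH ur.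
- by apply: bigsetU_measurable => i _; exact: mF.
- apply/seteqP; split => // w [Faw /bigU_mem [i [ir _ Fiw]]].
  have ai : a != i by apply: contraNneq ar => ->.
  by have := dF _ _ ai; move/seteqP => [+ _] => /(_ w (conj Faw Fiw)).
Qed.

Lemma measure_big_sub (I : choiceType) (r : seq I) (Pp : pred I) (F : I -> set Omega) :
  (forall i, measurable (F i)) ->
  (P (\big[setU/set0]_(i <- r | Pp i) F i) <= \sum_(i <- r | Pp i) P (F i))%E.
Proof.
move=> mF; elim: r => [|a r IH]; first by rewrite !big_nil measure0.
rewrite !big_cons; case: ifP => Pa //.
apply: le_trans (measureU2 _ _ _) _ => //.
- by apply: bigsetU_measurable => i _; exact: mF.
- exact: leeD.
Qed.

End MeasLemmas.

Section TLemmas.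
Context (R : realType) (n : nat) (d : measure_display) (T : measurableType d).
Variable mu : probability T R.
Variable p : T -> 'S_n -> R.
Hypothesis hp : cond_pmf p.

Lemma meas_fin (K : finType) (t : T -> K) (F : K -> R) :
  (forall k, measurable (t @^-1` [set k])) -> measurable_fun setT (fun x => F (t x)).
Proof.
move=> ht _ Y mY; rewrite setTI.
have -> : (fun x => F (t x)) @^-1` Y = \bigcup_(k in [set k | Y (F k)]) t @^-1` [set k].
  apply/seteqP; split => x /=; first by move=> Yx; exists (t x).
  by move=> [k Yk ->].
by apply: fin_bigcup_measurable => //; exact: finite_finset.
Qed.

Definition Psi (s1 s2 : T -> 'S_n) (Phi : 'S_n -> 'S_n -> 'S_n -> R) x :=
  \sum_g p x g * Phi (s1 x) (s2 x) g.

Definition RI s1 s2 Phi := Rintegral mu setT (Psi s1 s2 Phi).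

Lemma p_le1 x g : p x g <= 1.
Proof.
have [_ [p0 p1]] := hp; rewrite -(p1 x) (bigD1 g) //= lerDl.
by apply: sumr_ge0 => i _.
Qed.

Lemma le_sum_term (I : finType) (F : I -> R) i : (forall j, 0 <= F j) -> F i <= \sum_j F j.
Proof. by move=> F0; rewrite (bigD1 i) //= lerDl sumr_ge0. Qed.

Variables (s1 s2 : T -> 'S_n).
Hypothesis ms1 : measurable_rule s1.
Hypothesis ms2 : measurable_rule s2.

Lemma fib12 (k : 'S_n * 'S_n) : measurable ((fun x => (s1 x, s2 x)) @^-1` [set k]).
Proof.
case: k => a b.
have -> : (fun x => (s1 x, s2 x)) @^-1` [set (a, b)] = s1 @^-1` [set a] `&` s2 @^-1` [set b].
  by apply/seteqP; split => x /=; [case=> -> ->|case=> -> ->].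
exact: measurableI.
Qed.

Lemma Psi_meas Phi : measurable_fun setT (Psi s1 s2 Phi).
Proof.
apply: measurable_sum => g; apply: measurable_realfun.measurable_funM; first exact: hp.1.
exact: (meas_fin (fun k => Phi k.1 k.2 g) fib12).
Qed.

Lemma Psi_int Phi : mu.-integrable setT (EFin \o Psi s1 s2 Phi).
Proof.
apply: measurable_bounded_integrable => //.
- by apply: (@le_lt_trans _ _ 1%E); [exact: probability_le1 | exact: ltry].
- exact: Psi_meas.
set K := \sum_g \sum_(k : 'S_n * 'S_n) `|Phi k.1 k.2 g|.
rewrite /bounded_near; near=> M => x _ /=.
have KM : K <= M by near: M; apply: nbhs_pinfty_ge; exact: num_real.
apply: le_trans KM.
rewrite /Psi; apply: (le_trans (ler_norm_sum _ _ _)); apply: ler_sum => g _.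
rewrite normrM; have [_ [p0 _]] := hp.
apply: (le_trans (y := `|Phi (s1 x) (s2 x) g|)).
  rewrite -[X in _ <= X]mul1r ler_wpM2r // ger0_norm //; exact: p_le1.
exact: (@le_sum_term _ (fun k : 'S_n * 'S_n => `|Phi k.1 k.2 g|) (s1 x, s2 x) (fun k => normr_ge0 _)).
Unshelve. all: end_near.
Qed.

Lemma RI_add Phi1 Phi2 :
  RI s1 s2 (fun a b g => Phi1 a b g + Phi2 a b g) = RI s1 s2 Phi1 + RI s1 s2 Phi2.
Proof.
rewrite /RI -RintegralD //; try exact: Psi_int.
apply: eq_Rintegral => x _; rewrite /Psi -big_split /=.
by apply: eq_bigr => g _; rewrite mulrDr.
Qed.

Lemma RI_scale c Phi : RI s1 s2 (fun a b g => c * Phi a b g) = c * RI s1 s2 Phi.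
Proof.
rewrite /RI -RintegralZl //; last exact: Psi_int.
apply: eq_Rintegral => x _; rewrite /Psi mulr_sumr.
by apply: eq_bigr => g _; rewrite mulrCA.
Qed.

Lemma RI_cst c : RI s1 s2 (fun _ _ _ => c) = c.
Proof.
have [_ [_ p1]] := hp.
rewrite /RI.
have -> : Psi s1 s2 (fun _ _ _ => c) = fun _ => c.
  by apply/funext => x; rewrite /Psi -mulr_suml p1 mul1r.
have h1 : fine (mu setT) = 1 by rewrite -[RHS]/(fine 1%E); congr fine; exact: probability_setT.
by rewrite Rintegral_cst // h1 mulr1.
Qed.

Lemma RI_sum (I : Type) (r : seq I) (F : I -> 'S_n -> 'S_n -> 'S_n -> R) :
  RI s1 s2 (fun a b g => \sum_(v <- r) F v a b g) = \sum_(v <- r) RI s1 s2 (F v).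
Proof.
elim: r => [|v r IH].
  rewrite big_nil; transitivity (RI s1 s2 (fun _ _ _ => 0)); last exact: RI_cst.
  by congr RI; apply/funext => a; apply/funext => b; apply/funext => g; rewrite big_nil.
rewrite big_cons -IH -RI_add; congr RI; apply/funext => a; apply/funext => b.
by apply/funext => g; rewrite big_cons.
Qed.

Lemma RI_le Phi1 Phi2 : (forall x, Psi s1 s2 Phi1 x <= Psi s1 s2 Phi2 x) ->
  RI s1 s2 Phi1 <= RI s1 s2 Phi2.
Proof. by move=> h; apply: le_Rintegral => //; try exact: Psi_int; move=> x _; exact: h. Qed.

Lemma RI_ge0 Phi : (forall a b g, 0 <= Phi a b g) -> 0 <= RI s1 s2 Phi.
Proof.
move=> h; have [_ [p0 _]] := hp; apply: Rintegral_ge0 => x _.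
by apply: sumr_ge0 => g _; apply: mulr_ge0.
Qed.

End TLemmas.

Section Bc.
Context (R : realType) (n N : nat) (dO : measure_display) (Omega : measurableType dO).
Variable P : probability Omega R.
Context (d : measure_display) (T : measurableType d).
Variable mu : probability T R.
Variable p : T -> 'S_n -> R.
Variables (X : 'I_N -> Omega -> T) (Sg : 'I_N -> Omega -> 'S_n).
Hypothesis hp : cond_pmf p.
Hypothesis hiid : iid_sample P mu p X Sg.
Variable sstar : T -> 'S_n.
Hypothesis msstar : measurable_rule sstar.
Variable s : T -> 'S_n.
Hypothesis ms : measurable_rule s.

Definition V := ('S_n * 'S_n * 'S_n)%type.
Definition Ek (k : 'I_N) (v : V) : set Omega :=
  [set w | (s (X k w) = v.1.1 /\ sstar (X k w) = v.1.2) /\ Sg k w = v.2].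
Definition Av (v : V) : set T := [set x | s x = v.1.1 /\ sstar x = v.1.2].
Definition Phiv (v : V) : 'S_n -> 'S_n -> 'S_n -> R :=
  fun a b g => ((a == v.1.1) && (b == v.1.2) && (g == v.2))%:R.
Definition rho (v : V) := RI mu p s sstar (Phiv v).

Lemma mAv v : measurable (Av v).
Proof. exact: measurableI (ms _) (msstar _). Qed.

Lemma mEk k v : measurable (Ek k v).
Proof.
have [hX [hSg _]] := hiid.
have -> : Ek k v = Sg k @^-1` [set v.2] `&` (setT `&` X k @^-1` Av v).
  by apply/seteqP; split => w /=; [case=> h1 h2|case=> h2 [_ h1]].
apply: measurableI; first exact: hSg.
exact: hX k measurableT _ (mAv v).
Qed.

Lemma Ek_eq k v w : Ek k v w -> v = (s (X k w), sstar (X k w), Sg k w).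
Proof. by case: v => [[a b] g] /= [[-> ->] ->]. Qed.

Lemma PEk k v : P (Ek k v) = (rho v)%:E.
Proof.
have [_ [_ [h3 _]]] := hiid.
rewrite /Ek (h3 k (Av v) v.2 (mAv v)) integral_mkcond.
rewrite /rho /RI /Rintegral fineK; last first.
  exact: integrable_fin_num (Psi_int mu hp ms msstar _).
apply: eq_integral => x _; rewrite /restrict /Psi /Phiv.
case: ifPn => [/set_mem [ea eb]|hx].
  rewrite ea eb !eqxx /= (bigD1 v.2) //= eqxx mulr1 big1 ?addr0 //.
  by move=> g /negbTE ->; rewrite mulr0.
rewrite big1 // => g _.
suff -> : (s x == v.1.1) && (sstar x == v.1.2) = false by rewrite mulr0.
apply/negbTE/negP => /andP[/eqP ea /eqP eb]; apply: (negP hx).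
by apply/mem_set.
Qed.

Lemma PEcap (z : {ffun 'I_N -> V}) :
  P (\bigcap_(k in [set: 'I_N]) Ek k (z k)) = (\prod_k rho (z k))%:E.
Proof.
have [_ [_ [_ h4]]] := hiid.
pose A := fun k (g : 'S_n) x => (s x = (z k).1.1 /\ sstar x = (z k).1.2) /\ g = (z k).2.
have hA : forall k g, measurable (A k g).
  move=> k g; case: (pselect (g = (z k).2)) => [->|ne].
    have -> : A k (z k).2 = Av (z k) by apply/seteqP; split => x /=; [case|].
    exact: mAv.
  have -> : A k g = set0 by apply/seteqP; split => x //=; case.
  exact: measurable0.
transitivity (P (\bigcap_(k in [set: 'I_N]) [set w | A k (Sg k w) (X k w)])); first by [].
rewrite h4 //; congr EFin; apply: eq_bigr => k _.
have -> : P [set w | A k (Sg k w) (X k w)] = P (Ek k (z k)) by [].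
by rewrite PEk.
Qed.

Definition bad (z : {ffun 'I_N -> V}) :=
  (\sum_k d_tau (z k).1.1 (z k).2 <= \sum_k d_tau (z k).1.2 (z k).2)%N.
Definition Bc := \big[setU/set0]_(z | bad z) \bigcap_(k in [set: 'I_N]) Ek k (z k).

Lemma mBc : measurable Bc.
Proof.
apply: bigsetU_measurable => z _; apply: fin_bigcap_measurable.
  exact: finite_finset.
by move=> k _; exact: mEk.
Qed.

Lemma Bc_mem w :
  (\sum_k d_tau (s (X k w)) (Sg k w) <= \sum_k d_tau (sstar (X k w)) (Sg k w))%N -> Bc w.
Proof.
move=> hw; apply/bigU_mem; exists [ffun k => (s (X k w), sstar (X k w), Sg k w)].
split; first exact: mem_index_enum.
  rewrite /bad; under eq_bigr do rewrite ffunE.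
  by under [X in (_ <= X)%N]eq_bigr do rewrite ffunE.
by move=> k _; rewrite ffunE.
Qed.

Lemma PBc : P Bc = (\sum_(z | bad z) \prod_k rho (z k))%:E.
Proof.
rewrite /Bc measure_big_disj.
- by rewrite -sumEFin; apply: eq_bigr => z _; rewrite PEcap.
- exact: index_enum_uniq.
- move=> z; apply: fin_bigcap_measurable; first exact: finite_finset.
  by move=> k _; exact: mEk.
- move=> z1 z2 ne; apply/seteqP; split => // w [h1 h2]; apply: (negP ne).
  apply/eqP/ffunP => k.
  by rewrite (Ek_eq (h1 k I)) (Ek_eq (h2 k I)).
Qed.

Variable H : R.
Hypothesis H0 : 0 < H.
Hypothesis hH : forall x (i j : 'I_n), (i < j)%N -> H <= `|pairp (p x) i j - 1/2|.
Hypothesis hsst : forall x, SST (p x).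
Hypothesis hsstar : forall x (i : 'I_n),
  (sstar x i : nat) = #|[pred k : 'I_n | (k != i) && (pairp (p x) i k < 1/2)]|.
Hypothesis n2 : (1 < n)%N.

Definition lam := ln (1 + 2 * H) / (npairs n)%:R.
Definition W (v : V) := expR (lam * ((d_tau v.1.2 v.2)%:R - (d_tau v.1.1 v.2)%:R)).
Definition Delta := risk mu p s - risk mu p sstar.

Lemma sumW : \sum_v rho v * W v <= 1 - H / (npairs n)%:R * Delta.
Proof.
have [_ [p0 p1]] := hp.
have e1 : \sum_v rho v * W v = RI mu p s sstar (fun a b g => \sum_v W v * Phiv v a b g).
  rewrite (RI_sum mu hp ms msstar); apply: eq_bigr => v _.
  by rewrite (RI_scale mu hp ms msstar) mulrC.
have e2 : (fun a b g => \sum_v W v * Phiv v a b g) = (fun a b g => W (a, b, g)).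
  apply/funext => a; apply/funext => b; apply/funext => g.
  rewrite (bigD1 (a, b, g)) //= /Phiv /= !eqxx mulr1 big1 ?addr0 // => v ne.
  suff -> : (a == v.1.1) && (b == v.1.2) && (g == v.2) = false by rewrite mulr0.
  apply/negbTE; apply: contra ne => /andP[/andP[/eqP -> /eqP ->] /eqP ->].
  by case: v => [[]].
rewrite e1 e2.
have risk_a : risk mu p s = RI mu p s sstar (fun a b g => (d_tau a g)%:R) by [].
have risk_b : risk mu p sstar = RI mu p s sstar (fun a b g => (d_tau b g)%:R) by [].
set c := H / (npairs n)%:R.
have e3 : 1 - c * Delta = RI mu p s sstar
    (fun a b g => 1 + (- c) * ((d_tau a g)%:R + (-1) * (d_tau b g)%:R)).
  rewrite (RI_add mu hp ms msstar (fun _ _ _ => 1)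
    (fun a b g => (- c) * ((d_tau a g)%:R + (-1) * (d_tau b g)%:R))).
  rewrite (RI_cst mu hp) (RI_scale mu hp ms msstar).
  rewrite (RI_add mu hp ms msstar (fun a b g => (d_tau a g)%:R)
    (fun a b g => (-1) * (d_tau b g)%:R)).
  rewrite (RI_scale mu hp ms msstar) -risk_a -risk_b /Delta; ring.
rewrite e3; apply: (RI_le mu hp ms msstar) => x.
rewrite /Psi /=.
have Mn0 := npairs_gt0 n2.
have Hh := H_half (p0 x) (p1 x) n2 (hH x).
have := core_chernoff (p0 x) (p1 x) (hsst x) (hsstar x) H0 (hH x) Mn0
  (mD_le_pairs (sstar x) (s x)) Hh.
rewrite -/lam => h; apply: (le_trans h) => {h}.
rewrite -/c le_eqVlt; apply/orP; left; apply/eqP.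
under [RHS]eq_bigr do rewrite mulrDr mulr1 mulrCA.
rewrite big_split /= p1 -mulr_sumr mulNr.
by under [in RHS]eq_bigr do rewrite mulN1r.
Qed.

Lemma PBc_bound :
  (P Bc <= (expR (- (N%:R * (H / (npairs n)%:R * Delta))))%:E)%E.
Proof.
rewrite PBc lee_fin.
set S := \sum_v rho v * W v.
have rho0 v : 0 <= rho v.
  by apply: (RI_ge0 mu hp) => a b g; exact: ler0n.
have W0 v : 0 < W v := expR_gt0 _.
have lam0 : 0 <= lam.
  rewrite /lam divr_ge0 // ln_ge0 //; have := H0; lra.
apply: (le_trans (y := \sum_(z | bad z) \prod_k (rho (z k) * W (z k)))).
  apply: ler_sum => z bz; rewrite big_split /=.
  apply: ler_peMr; first by apply: prodr_ge0 => k _.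
  rewrite /W -expR_sum; apply: le_trans (expR_ge1Dx _); rewrite lerDl.
  rewrite -mulr_sumr mulr_ge0 // sumrB -!natr_sum subr_ge0 ler_nat.
  exact: bz.
apply: (le_trans (y := \sum_(z : {ffun 'I_N -> V}) \prod_k (rho (z k) * W (z k)))).
  rewrite [X in _ <= X](bigID bad) /= lerDl; apply: sumr_ge0 => z _.
  by apply: prodr_ge0 => k _; apply: mulr_ge0 => //; exact: ltW.
rewrite -(bigA_distr_bigA (fun (k : 'I_N) (v : V) => rho v * W v)) /= -/S.
rewrite prodr_const card_ord.
have S0 : 0 <= S by apply: sumr_ge0 => v _; apply: mulr_ge0 => //; exact: ltW.
have S1 := sumW.
rewrite -/S in S1.
set t := H / (npairs n)%:R * Delta in S1 *.
apply: (le_trans (y := (1 - t) ^+ N)).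
  by apply: lerXn2r => //; rewrite nnegrE //; lra.
clearbody t; rewrite -mulrN expRM_natl.
apply: lerXn2r; rewrite ?nnegrE //; first lra.
by have := expR_ge1Dx (- t); lra.
Qed.

End Bc.

Unset Implicit Arguments.

Theorem proposition7 (R : realType) (n N C : nat)
  (dO : measure_display) (Omega : measurableType dO) (P : probability Omega R)
  (d : measure_display) (T : measurableType d) (mu : probability T R)
  (p : T -> 'S_n -> R)
  (X : 'I_N -> Omega -> T) (Sg : 'I_N -> Omega -> 'S_n)
  (f : 'I_C -> (T -> 'S_n)) (sstar : T -> 'S_n) (shat : Omega -> (T -> 'S_n))
  (delta : R) :
  (0 < N)%N ->
  cond_pmf p ->
  iid_sample P mu p X Sg ->
  (forall x, SST (p x)) ->
  0 < inf (range (fun x => minmargin (p x))) ->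
  (* S_0 = range f : a class of measurable rules of cardinality C *)
  injective f ->
  (forall c, measurable_rule (f c)) ->
  (* s^*(x) = sigma^*_{P_x}, given (0-based) by sigma^*(i) = #{k <> i | p_{i,k} < 1/2} *)
  (forall x (i : 'I_n), (sstar x i : nat) = #|[pred k : 'I_n | (k != i) && (pairp (p x) i k < 1/2)]|) ->
  (exists c, f c = sstar) ->
  (* shat is an empirical risk minimizer over S_0 *)
  (forall w, exists c, shat w = f c) ->
  (forall w c, emp_risk (R:=R) X Sg w (shat w) <= emp_risk (R:=R) X Sg w (f c)) ->
  0 < delta < 1 ->
  exists E : set Omega, measurable E /\ (P E >= (1 - delta)%:E)%E /\
    forall w, E w ->
      risk mu p (shat w) - risk_star mu p
      <= ((n * (n - 1))%:R / (2 * inf (range (fun x => minmargin (p x)))))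
         * (ln (C%:R / delta) / N%:R).
Proof.
move=> N0 hp hiid hsst Hpos finj fmeas hsstar [c0 hc0] hshat hmin /andP[d0 d1].
set H := inf (range (fun x => minmargin (p x))) in Hpos *.
have [p0 p1] := hp.2.
have smeas : measurable_rule sstar by rewrite -hc0.
have mm0 x : 0 <= minmargin (p x).
  rewrite /minmargin; apply: (big_ind (fun v => 0 <= v)) => //.
    by move=> a b a0 b0; rewrite le_min a0.
  move=> i _; apply: (big_ind (fun v => 0 <= v)) => //.
  by move=> a b a0 b0; rewrite le_min a0.
have hH x (i j : 'I_n) : (i < j)%N -> H <= `|pairp (p x) i j - 1/2|.
  move=> ij; apply: (le_trans (y := minmargin (p x))).
    have := @ge_inf R (range (fun x => minmargin (p x))).
    move=> /(_ _) h; apply: h; last by exists x.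
    by exists 0 => _ [y _ <-].
  rewrite /minmargin (bigD1 i) //= ge_min; apply/orP; left.
  by rewrite (bigD1 j) //= ge_min lexx.
have rstar : risk mu p sstar <= risk_star mu p.
  apply: lb_le_inf; first by exists (risk mu p sstar); exists sstar.
  move=> _ [s ms <-].
  have -> : risk mu p sstar = RI mu p s sstar (fun a b g => (d_tau b g)%:R) by [].
  have -> : risk mu p s = RI mu p s sstar (fun a b g => (d_tau a g)%:R) by [].
  apply: (RI_le mu hp ms smeas) => x; rewrite /Psi -subr_ge0 -sumrB.
  have := opt_pt (p0 x) (p1 x) (hsst x) (hsstar x) Hpos (hH x) (s x).
  by under eq_bigr do rewrite mulrBr.
have Cpos : (0 < C)%N by apply: leq_ltn_trans (leq0n c0) (ltn_ord c0).
have [n1|n2] := leqP n 1.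
  exists setT; split; first exact: measurableT.
  split.
    have -> : P setT = 1%E by exact: probability_setT.
    by rewrite lee_fin; lra.
  move=> w _.
  have hz s : risk mu p s = 0.
    have -> : risk mu p s = RI mu p s s (fun a b g => (d_tau a g)%:R) by [].
    transitivity (RI mu p s s (fun _ _ _ => 0)); last exact: RI_cst.
    by congr RI; apply/funext => a; apply/funext => b; apply/funext => g; rewrite dtau0.
  have -> : (n * (n - 1))%N = 0%N.
    by rewrite (_ : n - 1 = 0)%N ?muln0 //; apply/eqP; rewrite subn_eq0.
  rewrite mul0r mul0r; have := hz sstar; have := hz (shat w); lra.
pose M : R := (npairs n)%:R.
have M0 : 0 < M by rewrite ltr0n npairs_gt0.
have eM : (n * (n - 1))%:R / (2 * H) = M / H.
  rewrite -npairs2 natrM -/M; field; rewrite gt_eqF //.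
rewrite eM.
set L := ln (C%:R / delta).
set theta := M / H * (L / N%:R).
have C0 : 0 < C%:R :> R by rewrite ltr0n.
have N0' : 0 < N%:R :> R by rewrite ltr0n.
have hbound c : theta < Delta mu p sstar (f c) ->
    expR (- (N%:R * (H / M * Delta mu p sstar (f c)))) <= delta / C%:R.
  move=> hc.
  have h1 : L < N%:R * (H / M * Delta mu p sstar (f c)).
    have : H / M * theta < H / M * Delta mu p sstar (f c).
      by rewrite ltr_pM2l // divr_gt0.
    have -> : H / M * theta = L / N%:R.
      by rewrite /theta; field; rewrite !gt_eqF.
    by rewrite ltr_pdivrMr // mulrC.
  have eL : expR (- L) = delta / C%:R.
    rewrite expRN /L lnK ?invf_div // posrE divr_gt0 //.
  rewrite -eL ler_expR; lra.
set U := \big[setU/set0]_(c | theta < Delta mu p sstar (f c)) Bc X Sg sstar (f c).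
have mU : measurable U.
  by apply: bigsetU_measurable => c _; have h := mBc hiid smeas (fmeas c); exact h.
exists (~` U); split; first exact: measurableC.
split.
  rewrite probability_setC //.
  have hU : (P U <= delta%:E)%E.
    apply: le_trans (measure_big_sub P _ _ _) _.
      by move=> c; have h := mBc hiid smeas (fmeas c); exact h.
    apply: (@le_trans _ _ (\sum_(c | theta < Delta mu p sstar (f c)) (delta / C%:R)%:E)).
      apply: lee_sum => c hc; apply: le_trans (PBc_bound hp hiid smeas (fmeas c) Hpos hH hsst hsstar n2) _.
      by rewrite lee_fin hbound.
    rewrite sumEFin lee_fin.
    apply: (le_trans (y := \sum_(c : 'I_C) (delta / C%:R))).
      rewrite [X in _ <= X](bigID (fun c => theta < Delta mu p sstar (f c))) /= lerDl.
      by apply: sumr_ge0 => c _; rewrite divr_ge0 // ltW.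
    have e' : delta / C%:R * C%:R = delta / C%:R *+ C by rewrite mulr_natr.
    by rewrite sumr_const card_ord -e' divfK // gt_eqF.
  have fU : P U \is a fin_num by rewrite fin_num_measure.
  rewrite -(fineK fU) (_ : (1 - (fine (P U))%:E)%E = (1 - fine (P U))%:E) ?EFinB // lee_fin.
  by rewrite -(fineK fU) lee_fin in hU; lra.
move=> w Uw; have [c hc] := hshat w; rewrite hc.
have nb : ~ (theta < Delta mu p sstar (f c)).
  move=> bc; apply: Uw; apply/bigU_mem; exists c; split => //; first exact: mem_index_enum.
  apply: Bc_mem.
  have := hmin w c0; rewrite hc hc0 /emp_risk ler_pM2l ?invr_gt0 //.
  by rewrite -!natr_sum ler_nat.
have : Delta mu p sstar (f c) <= theta by rewrite leNgt; apply/negP.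
rewrite /Delta; lra.
Qed.
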